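(* Let $a,b,k,m>0$ and consider, with bifurcation parameter $c>0$, the system $$\frac{dx}{dt}=bx(1-x-cy),\qquad \frac{dy}{dt}=y\Big(\frac{1}{1+kx}-y-ax-mxy\Big).$$ Suppose $u(E)<0$ and $m\ne 1-a-k$. Then the system undergoes a transcritical bifurcation around the boundary equilibrium $E_2=(0,1)$ at the bifurcation parameter threshold $c_{TR}=1$.
   Context: Here $u(x)=A_1x^3+A_2x^2+A_3x+A_4$ with $A_1=km$, $A_2=(-ac-m+1)k+m$, $A_3=-ac-k-m+1$, $A_4=c-1$ (the cubic whose roots in $(0,1)$ give the $x$-coordinates of positive equilibria $(x,(1-x)/c)$), and $E$ denotes the larger real root of $u'(x)$ (assumed to exist). All parameters are positive. *)

(* Defs.v *)
From Stdlib Require Import Reals.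
From Coquelicot Require Import Coquelicot.
Open Scope R_scope.

Inductive var := Vx | Vy | Vc.

Definition pd (v : var) (g : R -> R -> R -> R) : R -> R -> R -> R :=
  fun x y c =>
    match v with
    | Vx => Derive (fun t => g t y c) x
    | Vy => Derive (fun t => g x t c) y
    | Vc => Derive (fun t => g x y t) c
    end.

Definition ex_pd (v : var) (g : R -> R -> R -> R) (x y c : R) : Prop :=
  match v with
  | Vx => ex_derive (fun t => g t y c) x
  | Vy => ex_derive (fun t => g x t c) y
  | Vc => ex_derive (fun t => g x y t) c
  end.

Definition uncurry3 (g : R -> R -> R -> R) : R * R * R -> R :=
  fun p => g (fst (fst p)) (snd (fst p)) (snd p).

Definition C2_near (g : R -> R -> R -> R) (x0 y0 c0 : R) : Prop :=
  exists eps : R, 0 < eps /\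
    forall x y c, Rabs (x - x0) < eps -> Rabs (y - y0) < eps ->
      Rabs (c - c0) < eps ->
      continuous (uncurry3 g) (x, y, c) /\
      (forall i, ex_pd i g x y c) /\
      (forall i, continuous (uncurry3 (pd i g)) (x, y, c)) /\
      (forall i j, ex_pd j (pd i g) x y c) /\
      (forall i j, continuous (uncurry3 (pd j (pd i g))) (x, y, c)).

(** Transcritical bifurcation of the planar family
      x' = F1 x y c,  y' = F2 x y c
    at the equilibrium (x0,y0) for the parameter value c0, in the sense of
    Sotomayor's theorem (Perko, Differential Equations and Dynamical
    Systems, Sec. 4.2), which is the criterion used in the paper:
    - F = (F1,F2) is C^2 near (x0,y0,c0) and F(x0,y0,c0) = 0;
    - A = DF(x0,y0,c0) has 0 as a simple eigenvalue
      (characteristic polynomial l^2 - tr A l + det A: det A = 0, tr A <> 0);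
    - with v <> 0, A v = 0 and w <> 0, A^T w = 0:
        w . F_c = 0,  w . (DF_c v) <> 0,  w . D^2F(v,v) <> 0
      (all evaluated at (x0,y0,c0)). *)
Definition transcritical_bifurcation (F1 F2 : R -> R -> R -> R)
  (x0 y0 c0 : R) : Prop :=
  C2_near F1 x0 y0 c0 /\ C2_near F2 x0 y0 c0 /\
  F1 x0 y0 c0 = 0 /\ F2 x0 y0 c0 = 0 /\
  let a11 := pd Vx F1 x0 y0 c0 in
  let a12 := pd Vy F1 x0 y0 c0 in
  let a21 := pd Vx F2 x0 y0 c0 in
  let a22 := pd Vy F2 x0 y0 c0 in
  (a11 * a22 - a12 * a21 = 0 /\ a11 + a22 <> 0) /\
  exists v1 v2 w1 w2 : R,
    (v1 <> 0 \/ v2 <> 0) /\ (w1 <> 0 \/ w2 <> 0) /\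
    a11 * v1 + a12 * v2 = 0 /\ a21 * v1 + a22 * v2 = 0 /\
    w1 * a11 + w2 * a21 = 0 /\ w1 * a12 + w2 * a22 = 0 /\
    w1 * pd Vc F1 x0 y0 c0 + w2 * pd Vc F2 x0 y0 c0 = 0 /\
    w1 * (pd Vc (pd Vx F1) x0 y0 c0 * v1 + pd Vc (pd Vy F1) x0 y0 c0 * v2)
    + w2 * (pd Vc (pd Vx F2) x0 y0 c0 * v1 + pd Vc (pd Vy F2) x0 y0 c0 * v2)
      <> 0 /\
    w1 * (pd Vx (pd Vx F1) x0 y0 c0 * v1 * v1
          + pd Vy (pd Vx F1) x0 y0 c0 * v1 * v2
          + pd Vx (pd Vy F1) x0 y0 c0 * v2 * v1
          + pd Vy (pd Vy F1) x0 y0 c0 * v2 * v2)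
    + w2 * (pd Vx (pd Vx F2) x0 y0 c0 * v1 * v1
          + pd Vy (pd Vx F2) x0 y0 c0 * v1 * v2
          + pd Vx (pd Vy F2) x0 y0 c0 * v2 * v1
          + pd Vy (pd Vy F2) x0 y0 c0 * v2 * v2) <> 0.

Definition field1 (b : R) : R -> R -> R -> R :=
  fun x y c => b * x * (1 - x - c * y).
Definition field2 (a k m : R) : R -> R -> R -> R :=
  fun x y c => y * (1 / (1 + k * x) - y - a * x - m * x * y).

Definition u_poly (a c k m x : R) : R :=
  let A1 := k * m in
  let A2 := (- a * c - m + 1) * k + m in
  let A3 := - a * c - k - m + 1 in
  let A4 := c - 1 in
  A1 * x ^ 3 + A2 * x ^ 2 + A3 * x + A4.
Definition du_poly (a c k m x : R) : R :=
  let A1 := k * m in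
  let A2 := (- a * c - m + 1) * k + m in
  let A3 := - a * c - k - m + 1 in
  3 * A1 * x ^ 2 + 2 * A2 * x + A3.

(* Main.v *)
Require Import Defs.
From Stdlib Require Import Reals Lra.
From Coquelicot Require Import Coquelicot.
Open Scope R_scope.

Definition P3 := (R * R * R)%type.

Lemma cR_plus (f g : P3 -> R) p : continuous f p -> continuous g p -> continuous (fun q => f q + g q) p.
Proof. intros; apply (continuous_plus f g); auto. Qed.
Lemma cR_mult (f g : P3 -> R) p : continuous f p -> continuous g p -> continuous (fun q => f q * g q) p.
Proof. intros; apply (continuous_mult f g); auto. Qed.
Lemma cR_opp (f : P3 -> R) p : continuous f p -> continuous (fun q => - f q) p.
Proof. intros; apply (continuous_opp f); auto. Qed.
Lemma cR_minus (f g : P3 -> R) p : continuous f p -> continuous g p -> continuous (fun q => f q - g q) p.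
Proof. intros; apply cR_plus; auto; apply cR_opp; auto. Qed.
Lemma cR_inv (f : P3 -> R) p : continuous f p -> f p <> 0 -> continuous (fun q => / f q) p.
Proof. intros; apply (continuous_comp f Rinv); auto; apply continuous_Rinv; auto. Qed.
Lemma cR_const (r : R) (p : P3) : continuous (fun _ => r) p.
Proof. apply continuous_const. Qed.
Lemma cR_x (p : P3) : continuous (fun q : P3 => fst (fst q)) p.
Proof. destruct p as [[x y] c]. apply (continuous_comp fst fst). apply continuous_fst. apply continuous_fst. Qed.
Lemma cR_y (p : P3) : continuous (fun q : P3 => snd (fst q)) p.
Proof. destruct p as [[x y] c]. apply (continuous_comp fst snd). apply continuous_fst. apply continuous_snd. Qed.
Lemma cR_c (p : P3) : continuous (fun q : P3 => snd q) p.
Proof. destruct p as [[x y] c]. apply continuous_snd. Qed.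

Ltac cont := repeat first [ apply cR_plus | apply cR_minus | apply cR_mult | apply cR_opp
   | apply cR_inv | apply cR_x | apply cR_y | apply cR_c | apply cR_const ].

Section S.
Variable k : R.
Hypothesis kpos : 0 < k.
Definition Dom (x : R) := - / k < x.

Lemma D_pos x : Dom x -> 0 < 1 + k * x.
Proof. unfold Dom; intros H. apply Rmult_lt_compat_l with (r := k) in H; auto.
  rewrite Ropp_mult_distr_r_reverse, Rinv_r in H; lra. Qed.
Lemma D_nz x : Dom x -> 1 + k * x <> 0.
Proof. intros H; apply D_pos in H; lra. Qed.

Lemma locD x : Dom x -> locally x Dom.
Proof. intros H. apply (open_gt (- / k)). exact H. Qed.

Lemma locD3 x y c : Dom x -> locally (x, y, c) (fun q : P3 => Dom (fst (fst q))).
Proof. intros H. apply (cR_x (x,y,c) Dom). apply locD. exact H. Qed.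

Lemma cont_formula (h f : R -> R -> R -> R) x y c : Dom x ->
  (forall x y c, Dom x -> h x y c = f x y c) ->
  continuous (uncurry3 f) (x, y, c) -> continuous (uncurry3 h) (x, y, c).
Proof. intros Hx He Hc. apply (continuous_ext_loc _ (uncurry3 f)); auto.
  eapply filter_imp; [|apply (locD3 x y c Hx)]. intros [[x' y'] c']; simpl; intros; unfold uncurry3; simpl.
  symmetry; auto. Qed.

Lemma pd_formula i (h f : R -> R -> R -> R) x y c : Dom x ->
  (forall x y c, Dom x -> h x y c = f x y c) -> pd i h x y c = pd i f x y c.
Proof. intros Hx He. destruct i; simpl.
  - apply Derive_ext_loc. eapply filter_imp; [|apply (locD x Hx)]. intros; auto.
  - apply Derive_ext. intros; auto.
  - apply Derive_ext. intros; auto. Qed.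

Lemma ex_pd_formula i (h f : R -> R -> R -> R) x y c : Dom x ->
  (forall x y c, Dom x -> h x y c = f x y c) -> ex_pd i f x y c -> ex_pd i h x y c.
Proof. intros Hx He. destruct i; simpl; intros H.
  - apply (ex_derive_ext_loc (fun t => f t y c)); auto. eapply filter_imp; [|apply (locD x Hx)]. intros; symmetry; auto.
  - eapply ex_derive_ext; [|exact H]; intros; simpl; symmetry; auto.
  - eapply ex_derive_ext; [|exact H]; intros; simpl; symmetry; auto. Qed.

End S.
Lemma cR_div (f g : P3 -> R) p : continuous f p -> continuous g p -> g p <> 0 -> continuous (fun q => f q / g q) p.
Proof. intros; apply cR_mult; auto; apply cR_inv; auto. Qed.
Ltac cont2 := repeat first [ apply cR_plus | apply cR_minus | apply cR_mult | apply cR_div | apply cR_opp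
   | apply cR_inv | apply cR_x | apply cR_y | apply cR_c | apply cR_const ].
Ltac cont3 := lazymatch goal with
 | |- continuous (fun _ => ?r) _ => apply cR_const
 | |- continuous (fun q => fst (fst q)) _ => apply cR_x
 | |- continuous (fun q => snd (fst q)) _ => apply cR_y
 | |- continuous (fun q => snd q) _ => apply cR_c
 | |- continuous snd _ => apply cR_c
 | |- continuous (fun q => _ + _) _ => apply cR_plus; cont3
 | |- continuous (fun q => _ - _) _ => apply cR_minus; cont3
 | |- continuous (fun q => _ * _) _ => apply cR_mult; cont3
 | |- continuous (fun q => _ / _) _ => apply cR_div; [cont3|cont3|idtac]
 | |- continuous (fun q => - _) _ => apply cR_opp; cont3
 | |- continuous (fun q => / _) _ => apply cR_inv; [cont3|idtac]
 end.

Lemma C2_from k (kpos : 0 < k) (g : R->R->R->R) (g1 : Defs.var -> R->R->R->R) (g2 : Defs.var -> Defs.var -> R->R->R->R) :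
 (forall x y c, Dom k x -> forall i, pd i g x y c = g1 i x y c) ->
 (forall x y c, Dom k x -> forall i j, pd j (g1 i) x y c = g2 i j x y c) ->
 (forall x y c, Dom k x -> forall i, ex_pd i g x y c) ->
 (forall x y c, Dom k x -> forall i j, ex_pd j (g1 i) x y c) ->
 (forall x y c, Dom k x -> continuous (uncurry3 g) (x,y,c)) ->
 (forall x y c, Dom k x -> forall i, continuous (uncurry3 (g1 i)) (x,y,c)) ->
 (forall x y c, Dom k x -> forall i j, continuous (uncurry3 (g2 i j)) (x,y,c)) ->
 forall y0 c0, C2_near g 0 y0 c0.
Proof.
  intros H1 H2 E0 E1 C0 C1 C2 y0 c0.
  exists (/ k). split. apply Rinv_0_lt_compat; auto.
  intros x y c Hx _ _.
  assert (Dx : Dom k x). { unfold Dom. rewrite Rminus_0_r in Hx. apply Rabs_def2 in Hx. lra. }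
  split; [auto|]. split; [auto|]. split.
  { intros i. apply (cont_formula k _ (g1 i)); auto. }
  split.
  { intros i j. apply (ex_pd_formula k _ _ (g1 i)); auto. }
  intros i j. apply (cont_formula k _ (g2 i j)); auto.
  intros x' y' c' Dx'. rewrite (pd_formula k j _ (g1 i)); auto.
Qed.

Ltac nz := cbn [fst snd]; repeat apply Rmult_integral_contrapositive_currified; auto.
Section F2.
Variables a k m : R.
Hypothesis kpos : 0 < k.

Definition f2_1 (i : Defs.var) : R -> R -> R -> R :=
  match i with
  | Vx => fun x y c => - k * y * / ((1 + k * x) * (1 + k * x)) - a * y - m * y * y
  | Vy => fun x y c => / (1 + k * x) - 2 * y - a * x - 2 * m * x * y
  | Vc => fun x y c => 0
  end.
Definition f2_2 (i j : Defs.var) : R -> R -> R -> R :=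
  match i, j with
  | Vx, Vx => fun x y c => 2 * k * k * y * / ((1 + k * x) * (1 + k * x) * (1 + k * x))
  | Vx, Vy => fun x y c => - k * / ((1 + k * x) * (1 + k * x)) - a - 2 * m * y
  | Vy, Vx => fun x y c => - k * / ((1 + k * x) * (1 + k * x)) - a - 2 * m * y
  | Vy, Vy => fun x y c => - 2 - 2 * m * x
  | _, _ => fun x y c => 0
  end.

Lemma f2_pd1 i x y c : Dom k x -> pd i (field2 a k m) x y c = f2_1 i x y c.
Proof. intros Dx. pose proof (D_nz k kpos x Dx).
    destruct i; unfold pd, f2_1, field2; apply is_derive_unique; auto_derive; auto; field; auto. Qed.
Lemma f2_pd2' i j x y c : Dom k x -> pd j (f2_1 i) x y c = f2_2 i j x y c.
Proof. intros Dx. pose proof (D_nz k kpos x Dx).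
    destruct i, j; unfold pd, f2_1, f2_2; apply is_derive_unique; auto_derive; auto; field; auto. Qed.
Lemma f2_pd2 i j x y c : Dom k x -> pd j (pd i (field2 a k m)) x y c = f2_2 i j x y c.
Proof. intros Dx. rewrite (pd_formula k j _ (f2_1 i)); auto. apply f2_pd2'; auto.
  intros; apply f2_pd1; auto. Qed.
Lemma f2_C2 : C2_near (field2 a k m) 0 1 1.
Proof.
  apply (C2_from k kpos _ f2_1 f2_2).
  - intros; apply f2_pd1; auto.
  - intros; apply f2_pd2'; auto.
  - intros x y c Dx i. pose proof (D_nz k kpos x Dx).
    destruct i; unfold ex_pd, field2; auto_derive; auto.
  - intros x y c Dx i j. pose proof (D_nz k kpos x Dx).
    destruct i, j; unfold ex_pd, f2_1; auto_derive; auto.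
  - intros x y c Dx. pose proof (D_nz k kpos x Dx).
    unfold uncurry3, field2; cbv beta; cont3; nz.
  - intros x y c Dx i. pose proof (D_nz k kpos x Dx).
    destruct i; unfold uncurry3, f2_1; cbv beta; cont3; nz.
  - intros x y c Dx i j. pose proof (D_nz k kpos x Dx).
    destruct i, j; unfold uncurry3, f2_2; cbv beta; cont3; nz.
Qed.
End F2.

Section F1.
Variables b k : R.
Hypothesis kpos : 0 < k.

Definition f1_1 (i : Defs.var) : R -> R -> R -> R :=
  match i with
  | Vx => fun x y c => b * (1 - 2 * x - c * y)
  | Vy => fun x y c => - b * c * x
  | Vc => fun x y c => - b * x * y
  end.
Definition f1_2 (i j : Defs.var) : R -> R -> R -> R :=
  match i, j with
  | Vx, Vx => fun x y c => - 2 * b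
  | Vx, Vy => fun x y c => - b * c
  | Vx, Vc => fun x y c => - b * y
  | Vy, Vx => fun x y c => - b * c
  | Vy, Vy => fun x y c => 0
  | Vy, Vc => fun x y c => - b * x
  | Vc, Vx => fun x y c => - b * y
  | Vc, Vy => fun x y c => - b * x
  | Vc, Vc => fun x y c => 0
  end.

Lemma f1_pd1 i x y c : pd i (field1 b) x y c = f1_1 i x y c.
Proof. destruct i; unfold pd, f1_1, field1; apply is_derive_unique; auto_derive; auto; ring. Qed.
Lemma f1_pd2' i j x y c : pd j (f1_1 i) x y c = f1_2 i j x y c.
Proof. destruct i, j; unfold pd, f1_1, f1_2; apply is_derive_unique; auto_derive; auto; ring. Qed.
Lemma f1_pd2 i j x y c : Dom k x -> pd j (pd i (field1 b)) x y c = f1_2 i j x y c.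
Proof. intros Dx. rewrite (pd_formula k j _ (f1_1 i)); auto. apply f1_pd2'; auto.
  intros; apply f1_pd1; auto. Qed.
Lemma f1_C2 : C2_near (field1 b) 0 1 1.
Proof.
  apply (C2_from k kpos _ f1_1 f1_2).
  - intros; apply f1_pd1; auto.
  - intros; apply f1_pd2'; auto.
  - intros x y c Dx i.
    destruct i; unfold ex_pd, field1; auto_derive; auto.
  - intros x y c Dx i j.
    destruct i, j; unfold ex_pd, f1_1; auto_derive; auto.
  - intros x y c Dx.
    unfold uncurry3, field1; cbv beta; cont3.
  - intros x y c Dx i.
    destruct i; unfold uncurry3, f1_1; cbv beta; cont3.
  - intros x y c Dx i j.
    destruct i, j; unfold uncurry3, f1_2; cbv beta; cont3.
Qed.
End F1.

Theorem theorem9 (a b k m : R) (E : R) :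
  0 < a -> 0 < b -> 0 < k -> 0 < m ->
  du_poly a 1 k m E = 0 ->
  (forall z, du_poly a 1 k m z = 0 -> z <= E) ->
  u_poly a 1 k m E < 0 ->
  m <> 1 - a - k ->
  transcritical_bifurcation (field1 b) (field2 a k m) 0 1 1.
Proof.
  intros Ha Hb Hk Hm _ _ _ Hne.
  assert (D0 : Dom k 0). { unfold Dom. assert (0 < / k) by (apply Rinv_0_lt_compat; auto). lra. }
  unfold transcritical_bifurcation.
  split; [apply (f1_C2 b k Hk)|].
  split; [apply (f2_C2 a k m Hk)|].
  assert (E1 : 1 + k * 0 = 1) by ring.
  split; [unfold field1; ring|].
  split; [unfold field2; rewrite E1; field|].
  cbv zeta.
  rewrite !(f1_pd2 b k _ _ 0 1 1 D0), !(f2_pd2 a k m Hk _ _ 0 1 1 D0),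
    !(f1_pd1 b _ 0 1 1), !(f2_pd1 a k m Hk _ 0 1 1 D0).
  cbn [f1_1 f1_2 f2_1 f2_2]. rewrite E1, !Rmult_1_l, Rinv_1.
  split; [split; lra|].
  exists 1, (-(k + a + m)), 1, 0.
  split; [lra|]. split; [lra|].
  repeat split; try ring.
  - intro H. nra.
  - intro H. apply Hne. apply (Rmult_eq_reg_l (-2 * b)); [|nra]. nra.
Qed.
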